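(* Let $\mathbb{L}\subseteq\mathbb{R}^d\times\mathbb{R}$ be any closed convex cone, assume Boundedness, and let $A_0,\dots,A_T\in\mathcal{A}$. Let $(y_t,b_t)$ be generated by the projected strategic perceptron with cone $\mathbb{L}$ and stepsize $\gamma=1$, and $\mathcal{M}_T=\{t\in\{0,\dots,T\}:\hat\ell(r(A_t,y_t,b_t),y_t,b_t)\ne\ell(A_t)\}$. Then for every $(y,b)\in\mathbb{L}\setminus\{0\}$, $$|\mathcal{M}_T|-\sum_{t\in\mathcal{M}_T}L_{\mathrm{hinge}}\big((y,b);(s(A_t,y_t,b_t),1),\ell(A_t)\big)\le\sqrt{\|y\|_2^2+b^2}\,\sqrt{\widetilde D^2+1}\,\sqrt{|\mathcal{M}_T|}.$$
   Context: Setting: $\mathcal{A}\subseteq\mathbb{R}^d$, labels $\ell(A)\in\{\pm1\}$; $\operatorname{sign}(0)=+1$; norm $\|\cdot\|$ with dual $\|y\|_*=\max_{\|w\|\le1}y^\top w$; constant $c>0$; a fixed selection $v$ with $v(0)=0$ and $v(y)\in\arg\max_{\|w\|\le1}y^\top w$ for $y\ne0$, with $v(\lambda y)=v(y)$ for $\lambda>0$. Predicted label $\hat\ell(x,y,b)=\operatorname{sign}(y^\top x+b-2\|y\|_*/c)$. Response: for $y\ne0$, $r(A,y,b)=A+(\tfrac2c-\tfrac{y^\top A+b}{\|y\|_*})v(y)$ if $0\le\tfrac{y^\top A+b}{\|y\|_*}<\tfrac2c$, else $A$. Proxy: for $y\ne0$, $s(A,y,b)=A-\tfrac{y^\top A+b}{\|y\|_*}v(y)$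 if $0\le\tfrac{y^\top A+b}{\|y\|_*}<\tfrac2c$ and $\ell(A)=-1$; $=A+(\tfrac2c-\tfrac{y^\top A+b}{\|y\|_*})v(y)$ if the range condition holds and $\ell(A)=+1$; $=A$ otherwise; $r(A,0,b)=s(A,0,b)=A$. Boundedness: $D:=\sup_{A\in\mathcal{A}}\|A\|_2<\infty$; $C_{\|\cdot\|}=\max_y\|v(y)\|_2$; $\widetilde D=D+\tfrac2cC_{\|\cdot\|}$. Hinge loss: $L_{\mathrm{hinge}}(q;\xi,\ell)=\max\{0,1-\ell\,q^\top\xi\}$ for $q,\xi\in\mathbb{R}^{d+1}$. Projected strategic perceptron with closed convex cone $\mathbb{L}$ and stepsize $\gamma>0$: $q_0=(y_0,b_0)=(0,0)$; for $t=0,1,\dots,T$: agent $A_t$ is shown $(y_t,b_t)$, responds $r(A_t,y_t,b_t)$, is predicted $\hat\ell(r(A_t,y_t,b_t),y_t,b_t)$; with $\xi_t=(s(A_t,y_t,b_t),1)$, set $z_{t+1}=q_t+\gamma\ell(A_t)\xi_t$ if the prediction differs from $\ell(A_t)$, else $z_{t+1}=q_t$; $q_{t+1}=(y_{t+1},b_{t+1})=\Pi_{\mathbb{L}}(z_{t+1})$ (Euclidean projection). *)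

(* Defs.v *)
From HB Require Import structures.
From mathcomp Require Import all_boot all_order all_algebra.
From mathcomp Require Import all_classical all_reals all_analysis.
Set Implicit Arguments. Unset Strict Implicit. Unset Printing Implicit Defensive.
Import Order.TTheory GRing.Theory Num.Theory.
Import numFieldNormedType.Exports.
Local Open Scope classical_set_scope.
Local Open Scope ring_scope.

Section Defs.
Variables (R : realType) (d : nat).

Definition dotv (x y : 'rV[R]_d) : R := \sum_(i < d) x 0 i * y 0 i.
Definition norm2 (x : 'rV[R]_d) : R := Num.sqrt (dotv x x).

Definition is_norm (nrm : 'rV[R]_d -> R) : Prop :=
  [/\ forall x, 0 <= nrm x,
      forall x, nrm x = 0 -> x = 0,
      forall (a : R) x, nrm (a *: x) = `|a| * nrm x &
      forall x y, nrm (x + y) <= nrm x + nrm y].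

Definition dualn (nrm : 'rV[R]_d -> R) (y : 'rV[R]_d) : R :=
  sup [set dotv y w | w in [set w | nrm w <= 1]].

Definition is_selection (nrm : 'rV[R]_d -> R) (v : 'rV[R]_d -> 'rV[R]_d) : Prop :=
  [/\ v 0 = 0,
      forall y, y != 0 -> nrm (v y) <= 1 /\
                (forall w, nrm w <= 1 -> dotv y w <= dotv y (v y)) &
      forall (l : R) y, 0 < l -> v (l *: y) = v y].

Definition sgn (r : R) : R := if 0 <= r then 1 else -1.

Definition ell (lab : 'rV[R]_d -> bool) (A : 'rV[R]_d) : R :=
  if lab A then 1 else -1.

Variables (nrm : 'rV[R]_d -> R) (c : R) (v : 'rV[R]_d -> 'rV[R]_d).

Definition predl (x y : 'rV[R]_d) (b : R) : R :=
  sgn (dotv y x + b - 2 * dualn nrm y / c).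

Definition in_range (A y : 'rV[R]_d) (b : R) : bool :=
  (0 <= (dotv y A + b) / dualn nrm y) && ((dotv y A + b) / dualn nrm y < 2 / c).

Definition resp (A y : 'rV[R]_d) (b : R) : 'rV[R]_d :=
  if y == 0 then A else
  if in_range A y b then A + (2 / c - (dotv y A + b) / dualn nrm y) *: v y
  else A.

Definition proxy (lab : 'rV[R]_d -> bool) (A y : 'rV[R]_d) (b : R) : 'rV[R]_d :=
  if y == 0 then A else
  if in_range A y b then
    (if lab A then A + (2 / c - (dotv y A + b) / dualn nrm y) *: v y
     else A - ((dotv y A + b) / dualn nrm y) *: v y)
  else A.

End Defs.

Section Perceptron.
Variables (R : realType) (d : nat).

Definition pdot (p q : 'rV[R]_d * R) : R := dotv p.1 q.1 + p.2 * q.2.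
Definition pnorm2 (p : 'rV[R]_d * R) : R := Num.sqrt (pdot p p).
Definition psub (p q : 'rV[R]_d * R) : 'rV[R]_d * R := (p.1 - q.1, p.2 - q.2).

Definition closed_convex_cone (L : set ('rV[R]_d * R)) : Prop :=
  [/\ closed L, L (0, 0),
      forall p q, L p -> L q -> L (p.1 + q.1, p.2 + q.2) &
      forall (l : R) p, 0 <= l -> L p -> L (l *: p.1, l * p.2)].

Definition is_proj (L : set ('rV[R]_d * R)) (z p : 'rV[R]_d * R) : Prop :=
  L p /\ forall q, L q -> pnorm2 (psub z p) <= pnorm2 (psub z q).

Definition hinge (q xi : 'rV[R]_d * R) (l : R) : R :=
  Num.max 0 (1 - l * pdot q xi).

Variables (nrm : 'rV[R]_d -> R) (c : R) (v : 'rV[R]_d -> 'rV[R]_d)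
  (lab : 'rV[R]_d -> bool).

Definition mistake (A y : 'rV[R]_d) (b : R) : bool :=
  predl nrm c (resp nrm c v A y b) y b != ell lab A.

Definition xi (A y : 'rV[R]_d) (b : R) : 'rV[R]_d * R :=
  (proxy nrm c v lab A y b, 1).

Definition pre_update (gamma : R) (A : 'rV[R]_d) (q : 'rV[R]_d * R) : 'rV[R]_d * R :=
  if mistake A q.1 q.2 then
    (q.1 + (gamma * ell lab A) *: (xi A q.1 q.2).1,
     q.2 + gamma * ell lab A * (xi A q.1 q.2).2)
  else q.

Definition is_projected_perceptron (L : set ('rV[R]_d * R)) (gamma : R)
    (T : nat) (A : nat -> 'rV[R]_d) (q : nat -> 'rV[R]_d * R) : Prop :=
  q 0%N = (0, 0) /\
  forall t, (t < T)%N -> is_proj L (pre_update gamma (A t) (q t)) (q t.+1).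

Definition mistakes (T : nat) (A : nat -> 'rV[R]_d) (q : nat -> 'rV[R]_d * R) : seq nat :=
  [seq t <- iota 0 T.+1 | mistake (A t) (q t).1 (q t).2].

End Perceptron.

(* Main.v *)
Require Import Defs.
From HB Require Import structures.
From mathcomp Require Import all_boot all_order all_algebra.
From mathcomp Require Import all_classical all_reals all_analysis.
Import Order.TTheory GRing.Theory Num.Theory.
Import numFieldNormedType.Exports.
Local Open Scope classical_set_scope.
Local Open Scope ring_scope.
From mathcomp Require Import lra ring.
Set Implicit Arguments. Unset Strict Implicit. Unset Printing Implicit Defensive.
Section NE.
Variables (R : realType) (d : nat).
Implicit Types x y : 'rV[R]_d.

Lemma S_compact : compact [set x : 'rV[R]_d | `|x| = 1].
Proof.
apply: bounded_closed_compact.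
  exists 1; split; first by rewrite realE ler01.
  by move=> M M1 x /= ->; exact: ltW.
have -> : [set x : 'rV[R]_d | `|x| = 1] = (@Num.Def.normr R _) @^-1` [set r | r = 1] by [].
apply: (@preimage_closed _ _ (@Num.Def.normr R _) [set r : R | r = 1]).
  by move=> x _; exact: norm_continuous.
exact: (@closed_eq R 1).
Qed.

Lemma coord_le x i : `|x 0 i| <= `|x|.
Proof.
rewrite [leRHS]/Num.Def.normr /= mx_normrE.
by apply/bigmax_geP; right; exists (0, i).
Qed.

Variable nrm : 'rV[R]_d -> R.
Hypothesis hn : is_norm nrm.

Lemma nrm0 : nrm 0 = 0.
Proof. by case: hn => _ _ hZ _; rewrite -(scale0r (0 : 'rV[R]_d)) hZ normr0 mul0r. Qed.

Lemma nrmN x : nrm (- x) = nrm x.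
Proof. by case: hn => _ _ hZ _; rewrite -scaleN1r hZ normrN1 mul1r. Qed.

Lemma nrm_sum (F : 'I_d -> 'rV[R]_d) : nrm (\sum_i F i) <= \sum_i nrm (F i).
Proof.
case: hn => _ _ _ hD.
elim/big_rec2: _; first by rewrite nrm0.
by move=> i y1 y2 _ H; apply: le_trans (hD _ _) _; rewrite lerD2l.
Qed.

Lemma nrm_lip : exists K, 0 <= K /\ forall x, nrm x <= K * `|x|.
Proof.
case: hn => h0 _ hZ _.
exists (\sum_(i < d) nrm 'e_i); split; first by apply: sumr_ge0.
move=> x; rewrite {1}(row_sum_delta x).
apply: le_trans (nrm_sum _) _.
rewrite mulr_suml; apply: ler_sum => i _.
by rewrite hZ mulrC ler_wpM2l // coord_le.
Qed.

Lemma nrm_cont : continuous nrm.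
Proof.
case: nrm_lip => K [K0 HK].
have hD := hn; case: hD => h0 _ _ hD.
move=> x; apply/(@cvgrPdist_lt _ _ _ (nbhs x) (nbhs_filter x)) => e e0.
apply/(@nbhs_normP R 'rV[R]_d x); exists (e / (K + 1)).
  by rewrite /= divr_gt0 // ltr_wpDl.
move=> t /= Ht.
have H1 : `|nrm x - nrm t| <= nrm (x - t).
  rewrite ler_norml; apply/andP; split.
    have := hD (t - x) x; rewrite subrK -opprB nrmN; lra.
  have := hD (x - t) t; rewrite subrK; lra.
apply: le_lt_trans H1 _; apply: le_lt_trans (HK _) _.
have K1 : 0 < K + 1 by rewrite ltr_wpDl.
rewrite ltr_pdivlMr // mulrC in Ht.
apply: le_lt_trans Ht; rewrite ler_wpM2r //; lra.
Qed.

Lemma nrm_bound : exists M, forall x, nrm x <= 1 -> `|x| <= M.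
Proof.
have hn' := hn; case: hn' => h0 h00 hZ hD.
have key : forall x, x != 0 -> `| `|x|^-1 *: x | = 1.
  by move=> x x0; rewrite normrZ normfV normr_id mulVf // normr_eq0.
have [[c0 Sc0]|S0] := pselect ([set x : 'rV[R]_d | `|x| = 1] !=set0).
  have [|c cS cmin] := @EVT_min_rV R d nrm _ (ex_intro _ c0 Sc0) S_compact.
    exact: continuous_subspaceT nrm_cont.
  have c1 : `|c| = 1 by rewrite inE in cS.
  have cp : 0 < nrm c.
    rewrite lt_def h0 andbT; apply/eqP => /h00 c00.
    by move: c1; rewrite c00 normr0 => /eqP; rewrite eq_sym oner_eq0.
  exists (nrm c)^-1 => x hx.
  have [->|x0] := eqVneq x 0; first by rewrite normr0 invr_ge0 ltW.
  have := cmin (`|x|^-1 *: x); rewrite inE => /(_ (key x x0)).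
  rewrite hZ normfV normr_id => hc.
  have xp : 0 < `|x| by rewrite normr_gt0.
  have h1 : nrm c * `|x| <= 1.
    have := ler_wpM2r (ltW xp) hc; rewrite mulrAC mulVf ?gt_eqF // mul1r => h.
    exact: le_trans h hx.
  by rewrite -(ler_pM2l cp) mulfV ?gt_eqF.
exists 0 => x _.
have [->|x0] := eqVneq x 0; first by rewrite normr0.
by exfalso; apply: S0; exists (`|x|^-1 *: x); apply: key.
Qed.
End NE.

Section Dot.
Variables (R : realType) (d : nat).
Implicit Types x y w : 'rV[R]_d.

Lemma dotvC x y : dotv x y = dotv y x.
Proof. by apply: eq_bigr => i _; rewrite mulrC. Qed.

Lemma dotvDl x y w : dotv (x + y) w = dotv x w + dotv y w.
Proof. by rewrite /dotv -big_split; apply: eq_bigr => i _; rewrite !mxE mulrDl. Qed.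

Lemma dotvZl (a : R) x y : dotv (a *: x) y = a * dotv x y.
Proof. by rewrite /dotv mulr_sumr; apply: eq_bigr => i _; rewrite !mxE mulrA. Qed.

Lemma dotvDr x y w : dotv w (x + y) = dotv w x + dotv w y.
Proof. by rewrite dotvC dotvDl !(dotvC w). Qed.

Lemma dotvZr (a : R) x y : dotv y (a *: x) = a * dotv y x.
Proof. by rewrite dotvC dotvZl dotvC. Qed.

Lemma dotvNl x y : dotv (- x) y = - dotv x y.
Proof. by rewrite -scaleN1r dotvZl mulN1r. Qed.

Lemma dotvNr x y : dotv y (- x) = - dotv y x.
Proof. by rewrite dotvC dotvNl dotvC. Qed.

Lemma dotv0l y : dotv 0 y = 0.
Proof. by rewrite /dotv big1 // => i _; rewrite mxE mul0r. Qed.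

Lemma dotv0r y : dotv y 0 = 0.
Proof. by rewrite dotvC dotv0l. Qed.

Lemma dotv_ge0 x : 0 <= dotv x x.
Proof. by apply: sumr_ge0 => i _; rewrite -expr2 sqr_ge0. Qed.

Lemma dotv_eq0 x : dotv x x = 0 -> x = 0.
Proof.
move=> /eqP; rewrite psumr_eq0; last by move=> i _; rewrite -expr2 sqr_ge0.
move=> /allP H; apply/rowP => j; rewrite mxE.
have := H j (mem_index_enum j); rewrite /= mulf_eq0 orbb => /eqP <-.
by congr (x _ j); apply: val_inj.
Qed.

Lemma dotv_le_norm x : dotv x x <= d%:R * `|x| ^+ 2.
Proof.
apply: le_trans (_ : \sum_(i < d) `|x| ^+ 2 <= _); last first.
  by rewrite sumr_const card_ord mulr_natl.
apply: ler_sum => i _; rewrite -expr2 -real_normK ?num_real //.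
by rewrite lerXn2r ?nnegrE ?normr_ge0 // coord_le.
Qed.

Lemma cs_gen (xx xy yy : R) : 0 <= xx -> 0 <= yy ->
  (forall t, 0 <= xx - 2 * t * xy + t ^+ 2 * yy) -> (yy = 0 -> xy = 0) ->
  `|xy| <= Num.sqrt xx * Num.sqrt yy.
Proof.
move=> hx hy H H0.
have h2 : xy ^+ 2 <= xx * yy.
  have [y0|yn] := eqVneq yy 0; first by rewrite (H0 y0) y0 expr0n mulr0.
  have yp : 0 < yy by rewrite lt_def yn hy.
  have := H (xy / yy).
  have -> : xx - 2 * (xy / yy) * xy + (xy / yy) ^+ 2 * yy = xx - xy ^+ 2 / yy.
    by field.
  by rewrite subr_ge0 ler_pdivrMr.
by rewrite -sqrtrM // -sqrtr_sqr ler_sqrt // mulr_ge0.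
Qed.

Lemma cs_dotv x y : `|dotv x y| <= norm2 x * norm2 y.
Proof.
apply: cs_gen; rewrite ?dotv_ge0 //.
  move=> t; have := dotv_ge0 (x - t *: y).
  rewrite !dotvDl !dotvDr !dotvNl !dotvNr !dotvZl !dotvZr (dotvC y x).
  by move=> h; apply: le_trans h _; rewrite le_eqVlt; apply/orP; left; apply/eqP; ring.
by move=> /dotv_eq0 ->; rewrite dotv0r.
Qed.

End Dot.

Section PDot.
Variables (R : realType) (d : nat).
Implicit Types p q u : 'rV[R]_d * R.

Definition padd p (a : R) q : 'rV[R]_d * R := (p.1 + a *: q.1, p.2 + a * q.2).

Lemma pdotC p q : pdot p q = pdot q p.
Proof. by rewrite /pdot dotvC mulrC. Qed.

Lemma pdot_addl p a q u : pdot (padd p a q) u = pdot p u + a * pdot q u.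
Proof. rewrite /pdot /padd /= dotvDl dotvZl; ring. Qed.

Lemma pdot_add2 p a q : pdot (padd p a q) (padd p a q) =
  pdot p p + 2 * a * pdot p q + a ^+ 2 * pdot q q.
Proof.
rewrite /pdot /padd /= !dotvDl !dotvDr !dotvZl !dotvZr (dotvC q.1 p.1); ring.
Qed.

Lemma pdot_ge0 p : 0 <= pdot p p.
Proof. by rewrite /pdot addr_ge0 ?dotv_ge0 // -expr2 sqr_ge0. Qed.

Lemma pdot_eq0 p : pdot p p = 0 -> p = (0, 0).
Proof.
case: p => y b; rewrite /pdot /= => h.
have hy := dotv_ge0 y; have hb : 0 <= b * b by rewrite -expr2 sqr_ge0.
have y0 : dotv y y = 0 by apply/eqP; rewrite eq_le hy andbT; lra.
have b0 : b * b = 0 by lra.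
by rewrite (dotv_eq0 y0); move/eqP: b0; rewrite mulf_eq0 orbb => /eqP ->.
Qed.

Lemma cs_pdot p q : pdot p q <= Num.sqrt (pdot p p) * Num.sqrt (pdot q q).
Proof.
apply: le_trans (ler_norm _) _.
apply: cs_gen; rewrite ?pdot_ge0 //.
  move=> t; have := pdot_ge0 (padd p (- t) q).
  by rewrite pdot_add2 => h; apply: le_trans h _; rewrite le_eqVlt; apply/orP; left; apply/eqP; ring.
by move=> /pdot_eq0 ->; rewrite /pdot /= dotv0r mulr0 addr0.
Qed.

Lemma small_eps (a b : R) : 0 <= b ->
  (forall e, 0 < e -> e <= 1 -> 0 <= 2 * e * a + e ^+ 2 * b) -> 0 <= a.
Proof.
move=> hb H; rewrite leNgt; apply/negP => ha.
have hd : 0 < b - a + 1 by lra.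
pose e := - a / (b - a + 1).
have ep : 0 < e by rewrite /e divr_gt0 //; lra.
have e1 : e <= 1 by rewrite /e ler_pdivrMr //; lra.
have eb : e * b <= - a.
  rewrite /e mulrAC ler_pdivrMr //. nra.
have := H e ep e1.
have -> : 2 * e * a + e ^+ 2 * b = e * (2 * a + e * b) by ring.
rewrite pmulr_rge0 //; lra.
Qed.

Lemma proj_props L z p u : closed_convex_cone L -> is_proj L z p -> L u ->
  pdot z u <= pdot p u /\ pdot p p <= pdot z z.
Proof.
case=> _ L0 LD LZ [Lp Hmin] Lu.
set w := psub z p.
have hz : z = padd w 1 p.
  by rewrite /padd /w /psub scale1r mul1r !subrK; case: z {w Hmin}.
have Hq : forall q, L q -> pdot w w <= pdot (psub z q) (psub z q).
  move=> q Lq; have := Hmin q Lq.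
  by rewrite /pnorm2 -/w ler_sqrt // pdot_ge0.
have Hu : forall u', L u' -> pdot w u' <= 0.
  move=> u' Lu'.
  suff : 0 <= - pdot w u' by lra.
  apply: (small_eps (pdot_ge0 u')) => e e0 e1.
  have Lq : L (p.1 + e *: u'.1, p.2 + e * u'.2).
    by apply: (LD p (e *: u'.1, e * u'.2)) => //; apply: LZ => //; exact: ltW.
  have := Hq _ Lq.
  have -> : psub z (p.1 + e *: u'.1, p.2 + e * u'.2) = padd w (- e) u'.
    by rewrite /psub /padd /w /= scaleNr mulNr !opprD !addrA.
  rewrite pdot_add2 => h; nra.
have Hp : 0 <= pdot w p.
  apply: (small_eps (pdot_ge0 p)) => e e0 e1.
  have Lq : L ((1 - e) *: p.1, (1 - e) * p.2).
    by apply: LZ => //; lra.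
  have := Hq _ Lq.
  have -> : psub z ((1 - e) *: p.1, (1 - e) * p.2) = padd w e p.
    rewrite /psub /padd /w /= scalerBl scale1r mulrBl mul1r.
    congr (_, _); last by ring.
    by rewrite opprB addrCA addrC.
  rewrite pdot_add2 => h; nra.
have Hp' := Hu p Lp.
rewrite hz pdot_addl pdot_add2 mul1r expr1n mul1r.
split; first by have := Hu u Lu; lra.
have := pdot_ge0 w; lra.
Qed.

End PDot.

Section Strat.
Variables (R : realType) (d : nat) (nrm : 'rV[R]_d -> R) (c : R)
  (v : 'rV[R]_d -> 'rV[R]_d) (lab : 'rV[R]_d -> bool).
Hypotheses (hn : is_norm nrm) (hc : 0 < c) (hv : is_selection nrm v).

Lemma sup_max (E : set R) x : E x -> ubound E x -> sup E = x.
Proof.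
move=> Ex ub; apply/eqP; rewrite eq_le; apply/andP; split.
  by apply: ge_sup => //; exists x.
by apply: ub_le_sup => //; exists x.
Qed.

Lemma dualn0 : dualn nrm 0 = 0.
Proof.
apply: sup_max; first by exists 0; [rewrite /= (nrm0 hn) ler01 | rewrite dotv0l].
by move=> _ [w _ <-]; rewrite dotv0l.
Qed.

Lemma dualn_v y : y != 0 -> dualn nrm y = dotv y (v y).
Proof.
move=> y0; case: hv => _ /(_ y y0) [h1 h2] _.
apply: sup_max; first by exists (v y).
by move=> _ [w hw <-]; apply: h2.
Qed.

Lemma dualn_gt0 y : y != 0 -> 0 < dotv y (v y).
Proof.
move=> y0; case: hv => _ /(_ y y0) [h1 h2] _.
have hn' := hn; case: hn' => h0 h00 hZ _.
have ny : 0 < nrm y.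
  rewrite lt_def h0 andbT; apply/eqP => /h00 /eqP; exact/negP.
have yy : 0 < dotv y y.
  rewrite lt_def dotv_ge0 andbT; apply/eqP => /dotv_eq0 /eqP; exact/negP.
apply: lt_le_trans (h2 ((nrm y)^-1 *: y) _).
  by rewrite dotvZr mulr_gt0 // invr_gt0.
rewrite hZ ger0_norm; last by rewrite invr_ge0 ltW.
by rewrite mulVf ?gt_eqF.
Qed.

Lemma mistake_facts A y b : mistake nrm c v lab A y b ->
  ell lab A * (dotv y (proxy nrm c v lab A y b) + b) <= 0 /\
  exists z, 0 <= z <= 2 / c /\ proxy nrm c v lab A y b = A - z *: v y.
Proof.
rewrite /mistake /predl /resp /proxy /ell /sgn.
have [->|y0] := eqVneq y 0.
  rewrite dualn0 dotv0l mulr0 mul0r add0r subr0 => H.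
  split; last by exists 0; rewrite lexx divr_ge0 ?ltW // scale0r subr0.
  by move: H; case: (lab A); case: (lerP 0 b) => hb; rewrite ?eqxx //= => _; lra.
rewrite dualn_v //; have dp := dualn_gt0 y0.
set δ := dotv y (v y).
rewrite /in_range dualn_v // -/δ.
set S := dotv y A + b.
have c2 : 0 < 2 / c by rewrite divr_gt0.
case hr: (0 <= S / δ < 2 / c).
  have E : dotv y (A + (2 / c - S / δ) *: v y) + b - 2 * δ / c = 0.
    by rewrite dotvDr dotvZr -/δ /S /δ; field; rewrite !gt_eqF.
  rewrite E lexx.
  case: (lab A); rewrite ?eqxx //= => _.
  move/andP: hr => [hr1 hr2].
  split.
    rewrite dotvDr dotvNr dotvZr -/δ.
    have -> : dotv y A + - (S / δ * δ) + b = 0.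
      by rewrite /S /δ; field; rewrite gt_eqF.
    by rewrite mulr0.
  by exists (S / δ); rewrite hr1 ltW.
move: hr; rewrite ler_pdivlMr // ltr_pdivrMr // mul0r => hr mis.
split; last by exists 0; rewrite lexx ltW // scale0r subr0.
have e2 : 2 * δ / c = 2 / c * δ by rewrite mulrAC.
move: mis; rewrite -/S e2.
have p2 : 0 < 2 / c * δ by exact: mulr_gt0 c2 dp.
case: (lab A); case: (lerP 0 (S - 2 / c * δ)) => hs; rewrite ?eqxx //= => _.
  move: hr; case: (lerP 0 S) => h0 //=; last by move=> _; lra.
  by move=> /negbT; rewrite -leNgt => hh; lra.
lra.
Qed.

End Strat.

Section Bounds.
Variables (R : realType) (d : nat).

Lemma vbound (nrm : 'rV[R]_d -> R) (v : 'rV[R]_d -> 'rV[R]_d) :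
  is_norm nrm -> is_selection nrm v ->
  has_ubound [set norm2 (v y) | y in [set: 'rV[R]_d]].
Proof.
move=> hn hv; have [M HM] := nrm_bound hn.
exists (Num.sqrt (d%:R * M ^+ 2)) => _ [y _ <-].
have h1 : nrm (v y) <= 1.
  have [->|y0] := eqVneq y 0.
    by case: hv => -> _ _; rewrite (nrm0 hn) ler01.
  by case: hv => _ /(_ y y0) [] .
have h2 := HM _ h1.
rewrite /norm2 ler_sqrt; last by rewrite mulr_ge0 ?ler0n ?sqr_ge0.
apply: le_trans (dotv_le_norm _) _.
rewrite ler_wpM2l ?ler0n // !expr2; apply: ler_pM => //; exact: normr_ge0.
Qed.

Lemma norm2_sq (x : 'rV[R]_d) : norm2 x ^+ 2 = dotv x x.
Proof. by rewrite /norm2 sqr_sqrtr // dotv_ge0. Qed.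

Lemma norm2_ge0 (x : 'rV[R]_d) : 0 <= norm2 x.
Proof. exact: sqrtr_ge0. Qed.

Lemma proxy_sq (c : R) (A w : 'rV[R]_d) z D C : 0 < c -> 0 <= z <= 2 / c ->
  norm2 A <= D -> norm2 w <= C ->
  dotv (A - z *: w) (A - z *: w) <= (D + 2 / c * C) ^+ 2.
Proof.
move=> hc /andP [z0 z1] hA hw.
rewrite !dotvDl !dotvDr !dotvNl !dotvNr !dotvZl !dotvZr (dotvC w A).
rewrite -!norm2_sq.
have cs := cs_dotv A w; have := ler_norm (- dotv A w); rewrite normrN => cs'.
have nA := norm2_ge0 A; have nw := norm2_ge0 w.
have h1 : z * norm2 w <= 2 / c * C by apply: ler_pM.
have h2 : norm2 A + z * norm2 w <= D + 2 / c * C by lra.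
have h3 : 0 <= norm2 A + z * norm2 w by rewrite addr_ge0 // mulr_ge0.
have h4 : (norm2 A + z * norm2 w) ^+ 2 <= (D + 2 / c * C) ^+ 2.
  by rewrite lerXn2r // nnegrE; lra.
apply: le_trans h4.
have h5 : - (z * dotv A w) <= z * (norm2 A * norm2 w).
  rewrite -mulrN; apply: ler_wpM2l => //; lra.
nra.
Qed.

End Bounds.

Unset Implicit Arguments.
Theorem mainTheorem15 (R : realType) (d : nat)
  (Aset : set 'rV[R]_d) (lab : 'rV[R]_d -> bool)
  (nrm : 'rV[R]_d -> R) (c : R) (v : 'rV[R]_d -> 'rV[R]_d)
  (L : set ('rV[R]_d * R)) (T : nat)
  (A : nat -> 'rV[R]_d) (q : nat -> 'rV[R]_d * R) :
  is_norm nrm -> 0 < c -> is_selection nrm v ->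
  closed_convex_cone L ->
  (* Boundedness: D = sup_{A in Aset} ||A||_2 < oo *)
  has_ubound [set norm2 a | a in Aset] ->
  (forall t, (t <= T)%N -> Aset (A t)) ->
  is_projected_perceptron nrm c v lab L 1 T A q ->
  let D := sup [set norm2 a | a in Aset] in
  let C := sup [set norm2 (v y) | y in [set: 'rV[R]_d]] in
  let Dt := D + 2 / c * C in
  let M := mistakes nrm c v lab T A q in
  forall (y : 'rV[R]_d) (b : R), L (y, b) -> (y, b) != (0, 0) ->
    (size M)%:R
      - \sum_(t <- M) hinge (y, b) (xi nrm c v lab (A t) (q t).1 (q t).2) (ell lab (A t))
    <= Num.sqrt (norm2 y ^+ 2 + b ^+ 2) * Num.sqrt (Dt ^+ 2 + 1) * Num.sqrt (size M)%:R.
Proof.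
move=> hn hc hv hL hub hA [q0 hq] D C Dt M y b Lu u0.
set u := (y, b).
set K := Dt ^+ 2 + 1.
have hC : forall y', norm2 (v y') <= C.
  by move=> y'; apply: (ub_le_sup (vbound hn hv)); exists y'.
have hD : forall t, (t <= T)%N -> norm2 (A t) <= D.
  by move=> t ht; apply: (ub_le_sup hub); exists (A t) => //; apply: hA.
have ell2 : forall a, ell lab a ^+ 2 = 1.
  by move=> a; rewrite /ell; case: (lab a); rewrite ?expr1n ?sqrrN ?expr1n.
pose mis t := mistake nrm c v lab (A t) (q t).1 (q t).2.
pose hg t := hinge u (xi nrm c v lab (A t) (q t).1 (q t).2) (ell lab (A t)).
have step : forall t, (t <= T)%N ->
  pdot (q t) u + (if mis t then 1 - hg t else 0)
    <= pdot (pre_update nrm c v lab 1 (A t) (q t)) u /\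
  pdot (pre_update nrm c v lab 1 (A t) (q t)) (pre_update nrm c v lab 1 (A t) (q t))
    <= pdot (q t) (q t) + (if mis t then K else 0).
  move=> t ht; rewrite /pre_update /mis.
  case: ifP => hm; last by rewrite !addr0; split.
  have [h1 [z [hz hs]]] := mistake_facts hn hc hv hm.
  set s := proxy nrm c v lab (A t) (q t).1 (q t).2 in h1 hs *.
  set l := ell lab (A t).
  have -> : ((q t).1 + (1 * l) *: (xi nrm c v lab (A t) (q t).1 (q t).2).1,
          (q t).2 + 1 * l * (xi nrm c v lab (A t) (q t).1 (q t).2).2)
        = padd (q t) l (xi nrm c v lab (A t) (q t).1 (q t).2).
    by rewrite /padd mul1r.
  rewrite pdot_addl pdot_add2.
  have hxi : xi nrm c v lab (A t) (q t).1 (q t).2 = (s, 1) by [].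
  rewrite hxi; split.
    have : 1 - l * pdot u (s, 1) <= hg t.
      by rewrite /hg hxi /hinge le_max lexx orbT.
    rewrite (pdotC u); lra.
  have hss : pdot (s, 1) (s, 1) <= K.
    rewrite /pdot /= mulr1 /K lerD2r hs.
    exact: proxy_sq hc hz (hD t ht) (hC _).
  have hq1 : l * pdot (q t) (s, 1) <= 0 by rewrite /pdot /= mulr1.
  have l2 : l ^+ 2 = 1 by exact: ell2.
  have -> : 2 * l * pdot (q t) (s, 1) = 2 * (l * pdot (q t) (s, 1)) by ring.
  by rewrite l2 mul1r; lra.
pose F n := [seq t <- iota 0 n | mis t].
have Fs : forall n, F n.+1 = F n ++ (if mis n then [:: n] else [::]).
  by move=> n; rewrite /F -addn1 iotaD filter_cat /= add0n; case: (mis n).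
have ind : forall n, (n <= T)%N ->
  (size (F n))%:R - \sum_(t <- F n) hg t <= pdot (q n) u /\
  pdot (q n) (q n) <= (size (F n))%:R * K.
  elim=> [|n IH] hn'.
    rewrite /F /= big_nil q0 /pdot /= dotv0l dotv0r !mul0r !addr0 subr0.
    by split.
  have [IH1 IH2] := IH (ltnW hn').
  have [s1 s2] := step n (ltnW hn').
  have [p1 p2] := proj_props hL (hq n hn') Lu.
  rewrite Fs size_cat big_cat natrD /=.
  case: (mis n) s1 s2 => /= s1 s2.
    rewrite big_cons big_nil addr0; split; lra.
  rewrite big_nil addr0 addr0; split; lra.
have [IH1 IH2] := ind T (leqnn T).
have [s1 s2] := step T (leqnn T).
set zT := pre_update nrm c v lab 1 (A T) (q T) in s1 s2.
have HM : M = F T.+1 by [].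
have hF : (size M)%:R - \sum_(t <- M) hg t <= pdot zT u
  /\ pdot zT zT <= (size M)%:R * K.
  rewrite HM Fs size_cat big_cat natrD /=.
  case: (mis T) s1 s2 => /= s1 s2.
    rewrite big_cons big_nil addr0; split; lra.
  rewrite big_nil addr0 addr0; split; lra.
case: hF => hF1 hF2.
apply: le_trans hF1 _.
apply: le_trans (cs_pdot zT u) _.
have -> : norm2 y ^+ 2 + b ^+ 2 = pdot u u by rewrite norm2_sq /pdot /= expr2.
rewrite mulrC -mulrA ler_wpM2l ?sqrtr_ge0 //.
rewrite -sqrtrM; last by rewrite /K addr_ge0 ?sqr_ge0.
rewrite ler_sqrt; first by rewrite mulrC.
by rewrite mulr_ge0 ?ler0n // /K addr_ge0 ?sqr_ge0.
Qed.
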